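(* Let $\Sigma$ be a finite set of denial constraints, $D$ a nonempty instance, and $0<\epsilon<1$ such that $\epsilon|D|$ is an integer. Let $D_k\subseteq D$ with $|D_k|=\epsilon|D|$, and $D'=D\setminus D_k$. Then $$\mathit{inc\text{-}deg}^{c,g_3}(D',\Sigma)\le \frac{1}{1-\epsilon}\,\mathit{inc\text{-}deg}^{c,g_3}(D,\Sigma) \quad\text{and}\quad \mathit{inc\text{-}deg}^{c,g_3}(D,\Sigma)\le \frac{1}{1-\epsilon}\,\mathit{inc\text{-}deg}^{c,g_3}(D',\Sigma)+\epsilon .$$ Moreover, if no tuple of $D_k$ participates in a violation of $\Sigma$ in $D$ (i.e. no tuple of $D_k$ belongs to a subset-minimal set $S\subseteq D$ of tuples jointly violating some constraint of $\Sigma$), then $\mathit{inc\text{-}deg}^{c,g_3}(D,\Sigma)\le \frac{1}{1-\epsilon}\,\mathit{inc\text{-}deg}^{c,g_3}(D',\Sigma)$.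
   Context: A database instance is a finite set of ground atoms (tuples). A denial constraint (DC) is a sentence $\neg\exists\bar x\,(P_1(\bar x_1)\wedge\dots\wedge P_m(\bar x_m)\wedge\varphi)$ with the $P_i$ schema predicates and $\varphi$ a possibly empty conjunction of built-in comparisons; a set $S$ of tuples jointly violates it if $S$ satisfies the existential body. A subset-repair (S-repair) of $D$ wrt. $\Sigma$ is a $\subseteq$-maximal subset $D'\subseteq D$ that satisfies $\Sigma$; a cardinality-repair (C-repair) is an S-repair of maximum cardinality; $\mathit{Crep}(D,\Sigma)$ is the set of C-repairs. For nonempty $D$, $$\mathit{inc\text{-}deg}^{c,g_3}(D,\Sigma)=\frac{|D|-\max\{|D'| : D'\in \mathit{Crep}(D,\Sigma)\}}{|D|}.$$ *)

(* Defs.v *)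
From HB Require Import structures.
From mathcomp Require Import all_boot all_order all_algebra.
From Stdlib Require Import ClassicalEpsilon.
Set Implicit Arguments. Unset Strict Implicit. Unset Printing Implicit Defensive.

Section DC.
(* Pred: schema predicate symbols; C: constants, totally ordered
   (for the built-in comparisons). *)
Variables (Pred : eqType) (d : Order.disp_t) (C : orderType d).

Definition atom : eqType := (Pred * seq C)%type.
(* A database instance: a finite set of ground atoms, represented by a list
   read as a set (duplicates / order irrelevant). *)
Definition instance := seq atom.

Inductive term := TVar of nat | TConst of C.
Inductive cmpop := CEq | CNeq | CLt | CLe | CGt | CGe.

(* A denial constraint  ~ exists x, P1(x1) /\ ... /\ Pm(xm) /\ phi. *)
Record dc := DC { dc_body : seq (Pred * seq term);
                  dc_cmp  : seq (cmpop * term * term) }.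

Definition eval_term (nu : nat -> C) (t : term) : C :=
  match t with TVar n => nu n | TConst c => c end.

Definition eval_cmp (nu : nat -> C) (c : cmpop * term * term) : bool :=
  let: (o, t1, t2) := c in
  let x := eval_term nu t1 in let y := eval_term nu t2 in
  match o with
  | CEq => x == y | CNeq => x != y
  | CLt => (x < y)%O | CLe => (x <= y)%O
  | CGt => (y < x)%O | CGe => (y <= x)%O
  end.

Definition violates (S : instance) (s : dc) : Prop :=
  exists nu : nat -> C,
    all (fun a => (a.1, map (eval_term nu) a.2) \in S) (dc_body s) &&
    all (eval_cmp nu) (dc_cmp s).

Definition satisfies (S : instance) (Sigma : seq dc) : Prop :=
  forall s, List.In s Sigma -> ~ violates S s.

Definition subinst (S T : instance) : Prop := {subset S <= T}.
Definition icard (S : instance) : nat := size (undup S).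
Definition diff (D K : instance) : instance := [seq t <- D | t \notin K].

Definition is_Srep (D : instance) (Sigma : seq dc) (R : instance) : Prop :=
  subinst R D /\ satisfies R Sigma /\
  forall R', subinst R R' -> subinst R' D -> satisfies R' Sigma -> subinst R' R.

Definition is_Crep (D : instance) (Sigma : seq dc) (R : instance) : Prop :=
  is_Srep D Sigma R /\ forall R', is_Srep D Sigma R' -> icard R' <= icard R.

Definition pb (P : Prop) : bool :=
  if excluded_middle_informative P then true else false.

(* all sub-lists of a list (finitely many representatives of all subsets) *)
Fixpoint subseqs (s : instance) : seq instance :=
  match s with
  | [::] => [:: [::]]
  | x :: s' => subseqs s' ++ map (cons x) (subseqs s')
  end.

Definition maxCrep (D : instance) (Sigma : seq dc) : nat :=
  \max_(R <- subseqs (undup D) | pb (is_Crep D Sigma R)) icard R.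

Definition incdeg (D : instance) (Sigma : seq dc) : rat :=
  (((icard D)%:R - (maxCrep D Sigma)%:R) / (icard D)%:R)%R.

Definition participates (D : instance) (Sigma : seq dc) (t : atom) : Prop :=
  exists s S, List.In s Sigma /\ subinst S D /\ violates S s /\
    (forall S', subinst S' S -> violates S' s -> subinst S S') /\ t \in S.

End DC.

(* Main.v *)
Require Import Defs.
From HB Require Import structures.
From mathcomp Require Import all_boot all_order all_algebra.
From Stdlib Require Import Classical ClassicalEpsilon.
Import Order.TTheory GRing.Theory Num.Theory.
Set Implicit Arguments. Unset Strict Implicit.

Section Aux.
Variables (Pred : eqType) (d : Order.disp_t) (C : orderType d).
Implicit Types (S T : instance Pred C) (Sg : seq (dc Pred C)).

Lemma pbP (P : Prop) : reflect P (pb P).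
Proof. rewrite /pb; case: excluded_middle_informative => h; constructor => //. Qed.

Lemma violates_mono S T s : subinst S T -> violates S s -> violates T s.
Proof.
move=> ST [nu /andP[h1 h2]]; exists nu; rewrite h2 andbT.
by apply: sub_all h1 => a /= /ST.
Qed.

Lemma satisfies_sub S T Sg : subinst S T -> satisfies T Sg -> satisfies S Sg.
Proof. by move=> ST hT s hs hv; apply: (hT s hs); apply: violates_mono hv. Qed.

Lemma icard_eqmem S T : S =i T -> icard S = icard T.
Proof.
move=> e; rewrite /icard; apply: perm_size; apply: uniq_perm; rewrite ?undup_uniq //.
by move=> x; rewrite !mem_undup.
Qed.

Lemma icard_sub S T : subinst S T -> icard S <= icard T.
Proof.
move=> ST; rewrite /icard; apply: uniq_leq_size; first exact: undup_uniq.
by move=> x; rewrite !mem_undup => /ST.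
Qed.

Lemma subseqs_sub (R t : instance Pred C) : R \in subseqs t -> subseq R t.
Proof.
elim: t R => [|x t IH] R /=; first by rewrite inE => /eqP ->.
rewrite mem_cat => /orP[/IH h|/mapP[R' /IH h ->]].
  by apply: subseq_trans h (subseq_cons _ _).
by rewrite /= eqxx.
Qed.

Lemma sub_subseqs (R t : instance Pred C) : subseq R t -> R \in subseqs t.
Proof.
elim: t R => [|x t IH] R /=; first by move/eqP ->; rewrite inE.
case: R => [|y R] /=.
  move=> _; rewrite mem_cat; apply/orP; left; apply: IH; exact: sub0seq.
case: ifP => [/eqP <- h|_ h]; rewrite mem_cat; apply/orP.
  by right; apply/mapP; exists R => //; apply: IH.
by left; apply: IH.
Qed.

Lemma exists_max (T0 : eqType) (s : seq T0) (P : pred T0) (f : T0 -> nat) :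
  has P s -> exists x, [/\ x \in s, P x & forall y, y \in s -> P y -> f y <= f x].
Proof.
elim: s => [|a s IH] //=.
case Pa: (P a) => /=.
  case hs: (has P s).
    case: (IH hs) => x [xs Px hx].
    case: (leqP (f a) (f x)) => hax.
      exists x; split => //; first by rewrite inE xs orbT.
      by move=> y; rewrite inE => /orP[/eqP->|]; [|exact: hx].
    exists a; split => //; first by rewrite inE eqxx.
    move=> y; rewrite inE => /orP[/eqP->//|ys Py].
    by apply: leq_trans (hx _ ys Py) (ltnW hax).
  exists a; split => //; first by rewrite inE eqxx.
  move=> y; rewrite inE => /orP[/eqP->//|ys Py].
  by move/hasP: hs; case; exists y.
move=> hs; case: (IH hs) => x [xs Px hx]; exists x; split => //.
  by rewrite inE xs orbT.
by move=> y; rewrite inE => /orP[/eqP->|]; [rewrite Pa|exact: hx].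
Qed.

Lemma maxCrep_none D Sg : ~ satisfies [::] Sg -> maxCrep D Sg = 0.
Proof.
move=> h; apply/eqP; rewrite -leqn0; apply/bigmax_leqP_seq => R _ /pbP [[_ [hR _]] _].
by exfalso; apply: h; apply: satisfies_sub hR.
Qed.

Lemma maxCrep_le D Sg : maxCrep D Sg <= icard D.
Proof.
by apply/bigmax_leqP_seq => R _ /pbP [[hR _] _]; apply: icard_sub.
Qed.

Lemma maxCrep_char D Sg : satisfies [::] Sg ->
  exists X, [/\ subinst X D, satisfies X Sg, icard X = maxCrep D Sg &
    forall Y, subinst Y D -> satisfies Y Sg -> icard Y <= maxCrep D Sg].
Proof.
move=> h0.
have hL : has (fun R => pb (satisfies R Sg)) (subseqs (undup D)).
  apply/hasP; exists [::]; first by apply: sub_subseqs; exact: sub0seq.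
  by apply/pbP.
case: (exists_max (@icard Pred d C) hL) => X [XL /pbP XS hX].
have XD : subinst X D.
  by move=> x /(mem_subseq (subseqs_sub XL)); rewrite mem_undup.
have hY : forall Y, subinst Y D -> satisfies Y Sg -> icard Y <= icard X.
  move=> Y YD YS; set Y0 := [seq x <- undup D | x \in Y].
  have e : Y0 =i Y by move=> x; rewrite mem_filter mem_undup andb_idr // => /YD.
  rewrite -(icard_eqmem e); apply: hX.
    by apply: sub_subseqs; exact: filter_subseq.
  apply/pbP; apply: satisfies_sub YS => x; rewrite e.
  done.
have XC : is_Crep D Sg X.
  split; last by move=> R' [R'D [R'S _]]; apply: hY.
  split => //; split => // R' XR' R'D R'S.
  have sub : {subset undup X <= undup R'} by move=> y; rewrite !mem_undup => /XR'.
  have [_ e] := uniq_min_size (undup_uniq X) sub (hY _ R'D R'S).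
  by move=> x xR; move: (e x); rewrite !mem_undup xR.
have eq : icard X = maxCrep D Sg.
  apply/eqP; rewrite eqn_leq; apply/andP; split.
    by apply: leq_bigmax_seq => //; apply/pbP.
  by apply/bigmax_leqP_seq => R _ /pbP [[RD [RS _]] _]; apply: hY.
exists X; split => // Y YD YS; rewrite -eq; exact: hY.
Qed.

Lemma min_violating S s : violates S s ->
  exists S', [/\ subinst S' S, violates S' s &
     forall S'', subinst S'' S' -> violates S'' s -> subinst S' S''].
Proof.
move: {2}(icard S) (leqnn (icard S)) => n; elim: n S => [|n IH] S hn hv.
  exists S; split => // S'' S''S _ x xS.
  have : icard S <= icard S'' by move: hn; rewrite leqn0 => /eqP->.
  move=> hle.
  have sub : {subset undup S'' <= undup S} by move=> y; rewrite !mem_undup => /S''S.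
  have [_ e] := uniq_min_size (undup_uniq S'') sub hle.
  by move: (e x); rewrite !mem_undup xS.
case: (classic (forall S'', subinst S'' S -> violates S'' s -> subinst S S'')) => hm.
  by exists S; split.
have [S'' hh] := not_all_ex_not _ _ hm.
have [h1 hh'] := imply_to_and _ _ hh.
have [h2 h3] := imply_to_and _ _ hh'.
have lt : icard S'' < icard S.
  rewrite ltnNge; apply/negP => hle; apply: h3 => x xS.
  have sub : {subset undup S'' <= undup S} by move=> y; rewrite !mem_undup => /h1.
  have [_ e] := uniq_min_size (undup_uniq S'') sub hle.
  by move: (e x); rewrite !mem_undup xS.
have [S' [a b c]] := IH S'' (leq_trans (leq_trans lt hn) (leqnn _) : icard S'' <= n) h2.
  by exists S'; split => // x /a /h1.
Qed.

Lemma icard_cat_le S T : icard (Pred:=Pred) (C:=C) (S ++ T) <= icard S + icard T.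
Proof.
by rewrite /icard undup_cat size_cat leq_add2r size_filter count_size.
Qed.

Lemma icard_cat_disj S T : (forall x, x \in S -> x \notin T) ->
  icard (Pred:=Pred) (C:=C) (S ++ T) = icard S + icard T.
Proof.
move=> h; rewrite /icard undup_cat size_cat size_filter; congr (_ + _).
apply/eqP; rewrite -all_count; apply/allP => x; rewrite mem_undup; exact: h.
Qed.

Lemma icard_diff (D K : instance Pred C) : subinst K D -> icard (diff D K) + icard K = icard D.
Proof.
move=> KD; rewrite -icard_cat_disj; last by move=> x; rewrite mem_filter => /andP[].
apply: icard_eqmem => x; rewrite mem_cat mem_filter.
by case: (boolP (x \in K)) => [/KD -> //|]; rewrite orbF.
Qed.

End Aux.
From mathcomp Require Import ring lra.
Local Open Scope ring_scope.
Lemma invs (N e : rat) : 0 < N -> e < 1 ->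
  [/\ N * N^-1 = 1, (1 - e) * (1-e)^-1 = 1, 0 <= N^-1, 0 <= (1-e)^-1 &
      (N - e*N)^-1 = (1-e)^-1 * N^-1].
Proof.
move=> hN he; have h1 : 0 < 1 - e by rewrite subr_gt0.
split; rewrite ?mulfV ?gt_eqF // ?invr_ge0 ?ltW //.
by rewrite -invfM; congr (_^-1); ring.
Qed.

Lemma r1 (N M M' e : rat) : 0 < N -> 0 < e -> e < 1 ->
  N - e*N - M' <= N - M ->
  (N - e*N - M') / (N - e*N) <= (1-e)^-1 * ((N - M) / N).
Proof.
move=> hN he1 he2 h; have [hu hw hu0 hw0 ->] := @invs N e hN he2.
move: hu hw hu0 hw0; set u := N^-1; set w := (1-e)^-1 => hu hw hu0 hw0.
have hwu : 0 <= w * u by apply: mulr_ge0.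
have : 0 <= (N - M - (N - e*N - M')) * (w * u) by apply: mulr_ge0; lra.
nra.
Qed.

Lemma r2 (N M M' e : rat) : 0 < N -> 0 < e -> e < 1 ->
  0 <= N - e*N - M' -> M' <= M ->
  (N - M) / N <= (1-e)^-1 * ((N - e*N - M') / (N - e*N)) + e.
Proof.
move=> hN he1 he2 hA h; have [hu hw hu0 hw0 ->] := @invs N e hN he2.
move: hu hw hu0 hw0; set u := N^-1; set w := (1-e)^-1 => hu hw hu0 hw0.
have hew : 0 <= e * w by apply: mulr_ge0; lra.
have hw1 : 1 <= w by nra.
have hAu : 0 <= (N - e*N - M') * u by apply: mulr_ge0.
have hAwu : 0 <= (N - e*N - M') * (w * u) by apply: mulr_ge0 => //; apply: mulr_ge0.
have hA1 : 0 <= ((N - e*N - M') * u) * (w - 1) by apply: mulr_ge0; lra.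
have hA2 : 0 <= ((N - e*N - M') * (w * u)) * (w - 1) by apply: mulr_ge0; lra.
have hM : 0 <= (M - M') * u by apply: mulr_ge0; lra.
nra.
Qed.

Lemma r3 (N M M' e : rat) : 0 < N -> 0 < e -> e < 1 ->
  0 <= N - e*N - M' -> (N - M) * (1 - e) <= N - e*N - M' ->
  (N - M) / N <= (1-e)^-1 * ((N - e*N - M') / (N - e*N)).
Proof.
move=> hN he1 he2 hA h; have [hu hw hu0 hw0 ->] := @invs N e hN he2.
move: hu hw hu0 hw0; set u := N^-1; set w := (1-e)^-1 => hu hw hu0 hw0.
have hew : 0 <= e * w by apply: mulr_ge0; lra.
have hw1 : 1 <= w by nra.
have h0 : 0 <= ((N - e*N - M') - (N - M) * (1 - e)) * w by apply: mulr_ge0; lra.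
have h' : (N - M) <= w * (N - e*N - M') by nra.
have h1 : 0 <= (w * (N - e*N - M') - (N - M)) * u by apply: mulr_ge0; lra.
have h2 : 0 <= (w * (N - e*N - M') * u) * (w - 1).
  apply: mulr_ge0; last lra. apply: mulr_ge0 => //; apply: mulr_ge0 => //; lra.
nra.
Qed.

Theorem proposition3 (Pred : eqType) (d : Order.disp_t) (C : orderType d)
  (Sigma : seq (dc Pred C)) (D Dk : instance Pred C) (eps : rat) :
  D != [::] ->
  0 < eps -> eps < 1 ->
  (exists k : nat, eps * (icard D)%:R = k%:R) ->
  subinst Dk D ->
  (icard Dk)%:R = eps * (icard D)%:R ->
  incdeg (diff D Dk) Sigma <= (1 - eps)^-1 * incdeg D Sigma /\
  incdeg D Sigma <= (1 - eps)^-1 * incdeg (diff D Dk) Sigma + eps /\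
  ((forall t, t \in Dk -> ~ participates D Sigma t) ->
   incdeg D Sigma <= (1 - eps)^-1 * incdeg (diff D Dk) Sigma).
Proof.
move=> hD he1 he2 _ hKD hk.
set D' := diff D Dk.
have D'D : subinst D' D by move=> x; rewrite mem_filter => /andP[].
have hn : (0 < icard D)%N.
  case: D hD {hk hKD D'D D'} => [//|a D] _; rewrite lt0n size_eq0; apply/eqP => h.
  have : a \in undup (a :: D) by rewrite mem_undup inE eqxx.
  by rewrite h.
have hdiff := icard_diff hKD.
have hN : 0 < (icard D)%:R :> rat by rewrite ltr0n.
have hn' : (icard D')%:R = (icard D)%:R - eps * (icard D)%:R :> rat.
  by rewrite -hk -hdiff natrD addrK.
have hm'n' : (maxCrep D' Sigma <= icard D')%N := maxCrep_le D' Sigma.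
have hmn : (maxCrep D Sigma <= icard D)%N := maxCrep_le D Sigma.
have hA : 0 <= (icard D)%:R - eps * (icard D)%:R - (maxCrep D' Sigma)%:R :> rat.
  by rewrite -hn' subr_ge0 ler_nat.
rewrite /incdeg -/D' hn'.
set N := (icard D)%:R; set M := (maxCrep D Sigma)%:R; set M' := (maxCrep D' Sigma)%:R.
have {}hN : 0 < N := hN.
have {}hA : 0 <= N - eps * N - M' := hA.
have hk' : (icard Dk)%:R = eps * N := hk.
have heN : 0 <= eps * N by apply: mulr_ge0; apply: ltW.
case: (classic (satisfies [::] Sigma)) => h0; last first.
  rewrite /M /M' !maxCrep_none // in hA *.
  have hNe : N - eps * N - 0%:R = (N - 0%:R) * (1 - eps) by ring.
  split; first by apply: r1 => //; lra.
  split; first by apply: r2 => //; lra.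
  by move=> _; apply: r3 => //; rewrite hNe.
have [X [XD XS XM Xmax]] := maxCrep_char D h0.
have [X' [X'D X'S X'M X'max]] := maxCrep_char D' h0.
have hmm : (maxCrep D' Sigma <= maxCrep D Sigma)%N.
  by rewrite -X'M; apply: Xmax => // x /X'D /D'D.
have hmk : (maxCrep D Sigma <= maxCrep D' Sigma + icard Dk)%N.
  rewrite -XM; apply: leq_trans (icard_sub (T := diff X Dk ++ Dk) _) _.
    by move=> x xX; rewrite mem_cat mem_filter xX andbT; case: (x \in Dk).
  apply: leq_trans (icard_cat_le _ _) _; rewrite leq_add2r; apply: X'max.
    by move=> x; rewrite !mem_filter => /andP[-> /XD].
  by apply: satisfies_sub XS => x; rewrite mem_filter => /andP[].
have hMM : M' <= M by rewrite ler_nat.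
have hMK : M <= M' + eps * N by rewrite -hk' -natrD ler_nat.
split; first by apply: r1 => //; lra.
split; first by apply: r2 => //.
move=> hpart; apply: r3 => //.
have hmk' : (maxCrep D' Sigma + icard Dk <= maxCrep D Sigma)%N.
  have disj : forall x, x \in X' -> x \notin Dk.
    by move=> x /X'D; rewrite mem_filter => /andP[].
  rewrite -X'M -icard_cat_disj //; apply: Xmax.
    by move=> x; rewrite mem_cat => /orP[/X'D/D'D|/hKD].
  move=> s hs hv; have [S [SX Sv Smin]] := min_violating hv.
  case: (boolP (all (mem X') S)) => hall.
    by apply: (X'S s hs); apply: violates_mono Sv => x /(allP hall).
  case/allPn: hall => t tS tX0.
  have tX' : t \notin X' := tX0.
  have tK : t \in Dk by move: (SX t tS); rewrite mem_cat (negbTE tX').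
  apply: (hpart t tK); exists s, S; split => //; split => //.
  by move=> x /SX; rewrite mem_cat => /orP[/X'D/D'D|/hKD].
have hMK' : M' + eps * N <= M by rewrite -hk' -natrD ler_nat.
have hNM : 0 <= N - M by rewrite subr_ge0 ler_nat.
have : (N - M) * (1 - eps) <= N - M.
  have : 0 <= (N - M) * eps by apply: mulr_ge0 => //; lra.
  lra.
lra.
Qed.
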